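(* Let $G=(V,E)$ be a finite connected undirected graph with probability weights $w:E\to\mathbb{R}_{>0}$ and edge values $\omega:E\to\mathbb{R}$, let $r\in V$ be arbitrary, and let $T$ be a random spanning tree of $G$ with $\Pr(T)\propto\prod_{e\in E_T}w(e)$. Define $R(T)=\sum_{e\in E_T}\omega(e)$. Then $$\mathbb{E}[R(T)]=\operatorname{Tr}\Big[L_{G\times\omega}^{[r]}\big(L_G^{[r]}\big)^{-1}\Big],$$ $$\operatorname{Var}[R(T)]=\operatorname{Tr}\Big[\Big(L_{G\times\omega^2}^{[r]}-L_{G\times\omega}^{[r]}\big(L_G^{[r]}\big)^{-1}L_{G\times\omega}^{[r]}\Big)\big(L_G^{[r]}\big)^{-1}\Big].$$
   Context: For an edge weight function $c:E\to\mathbb{R}$, its Laplacian is $L=D-A$ with $A_{ij}=c(\{i,j\})$ (zero if $\{i,j\}\notin E$) and $D$ diagonal with $D_{ii}=\sum_jA_{ij}$. $L_G$, $L_{G\times\omega}$, $L_{G\times\omega^2}$ are the Laplacians for the edge weights $w(e)$, $w(e)\omega(e)$ and $w(e)\omega(e)^2$ respectively. For a matrix $M$ indexed by $V$, $M^{[r]}$ denotes $M$ with the row and column indexed by $r$ removed; $\operatorname{Tr}$ is the trace. *)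

(* Defs.v *)
From HB Require Import structures.
From mathcomp Require Import all_boot all_order all_algebra.
Set Implicit Arguments. Unset Strict Implicit. Unset Printing Implicit Defensive.
Import Order.TTheory GRing.Theory Num.Theory.
Local Open Scope ring_scope.

Section Graphs.
Variable V : finType.

(* A finite undirected graph is given by its edge set E : {set {set V}},
   every edge being a 2-element subset of V. *)
Definition simple_edges (E : {set {set V}}) : Prop :=
  forall e, e \in E -> #|e| = 2%N.

Definition adj (E : {set {set V}}) : rel V :=
  fun x y => (x != y) && ([set x; y] \in E).

Definition graph_connected (E : {set {set V}}) : Prop :=
  forall x y : V, connect (adj E) x y.

(* T is a spanning tree of (V,E): a subset of the edges which connects all
   vertices and has |V| - 1 edges (i.e. a connected acyclic spanning subgraph). *)
Definition spanning_tree (E T : {set {set V}}) : bool :=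
  [&& T \subset E, [forall x, forall y, connect (adj T) x y]
    & #|T| == #|V|.-1].

Variable R : realFieldType.

Definition tree_weight (w : {set V} -> R) (T : {set {set V}}) : R :=
  \prod_(e in T) w e.

Definition tree_Z (E : {set {set V}}) (w : {set V} -> R) : R :=
  \sum_(T : {set {set V}} | spanning_tree E T) tree_weight w T.

Definition tree_prob (E : {set {set V}}) (w : {set V} -> R) (T : {set {set V}}) : R :=
  tree_weight w T / tree_Z E w.

Definition Rval (om : {set V} -> R) (T : {set {set V}}) : R := \sum_(e in T) om e.

Definition expect (E : {set {set V}}) (w : {set V} -> R) (X : {set {set V}} -> R) : R :=
  \sum_(T : {set {set V}} | spanning_tree E T) tree_prob E w T * X T.

Definition variance (E : {set {set V}}) (w : {set V} -> R) (X : {set {set V}} -> R) : R :=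
  expect E w (fun T => (X T - expect E w X) ^+ 2).

End Graphs.

Section Laplacian.
Variables (R : realFieldType) (n : nat).
Local Notation V := 'I_n.+1.

Definition adjmx (E : {set {set V}}) (c : {set V} -> R) : 'M[R]_n.+1 :=
  \matrix_(i, j) (if adj E i j then c [set i; j] else 0).

Definition degmx (E : {set {set V}}) (c : {set V} -> R) : 'M[R]_n.+1 :=
  diag_mx (\row_i \sum_j adjmx E c i j).

Definition laplacian (E : {set {set V}}) (c : {set V} -> R) : 'M[R]_n.+1 :=
  degmx E c - adjmx E c.

Definition minor_rc (r : V) (M : 'M[R]_n.+1) : 'M[R]_n := row' r (col' r M).

End Laplacian.

(* Main.v *)
Require Import Defs.
From HB Require Import structures.
From mathcomp Require Import all_boot all_order all_algebra.
From mathcomp Require Import all_fingroup.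
From mathcomp Require Import ring.
Set Implicit Arguments. Unset Strict Implicit. Unset Printing Implicit Defensive.
Import Order.TTheory GRing.Theory Num.Theory.
Local Open Scope ring_scope.

Section CB.
Variables (S : comPzRingType) (n : nat) (K : finType).

Lemma det_sum_expand (a b : K -> 'I_n -> S) :
  \det (\matrix_(i, j) \sum_k a k i * b k j) =
  \sum_(f : {ffun 'I_n -> K}) (\prod_i a (f i) i) * \det (\matrix_(i, j) b (f i) j).
Proof.
rewrite /determinant.
under eq_bigr => s _.
  rewrite (eq_bigr (fun i => \sum_k a k i * b k (s i))); last by move=> i _; rewrite mxE.
  rewrite bigA_distr_bigA big_distrr /=.
  over.
rewrite exchange_big /=; apply: eq_bigr => f _.
rewrite big_distrr /=; apply: eq_bigr => s _.
rewrite big_split /= mulrCA; congr (_ * (_ * _)).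
by apply: eq_bigr => i _; rewrite mxE.
Qed.
End CB.

Section Deriv.
Variable R : comNzRingType.

Lemma deriv_prod_seq (I : eqType) (s : seq I) (F : I -> {poly R}) : uniq s ->
  (\prod_(j <- s) F j)^`() =
  \sum_(i <- s) \prod_(j <- s) (if j == i then (F j)^`() else F j).
Proof.
elim: s => [|a s IH] /=; first by rewrite !big_nil derivC.
case/andP => nas us.
rewrite big_cons derivM IH // big_cons big_cons eqxx; congr (_ * _ + _).
  rewrite big_seq_cond [RHS]big_seq_cond; apply: eq_bigr => j /andP[js _].
  by case: eqP js nas => // -> ->.
rewrite big_distrr /=; rewrite big_seq_cond [RHS]big_seq_cond.
apply: eq_bigr => i /andP[iS _]; rewrite big_cons.
by case: eqP iS nas => // <- ->.
Qed.

Lemma deriv_prod (I : finType) (F : I -> {poly R}) :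
  (\prod_j F j)^`() = \sum_i \prod_j (if j == i then (F j)^`() else F j).
Proof.
exact: deriv_prod_seq (index_enum_uniq I).
Qed.

Lemma deriv_sign_mul (b : nat) (p : {poly R}) : ((-1) ^+ b * p)^`() = (-1) ^+ b * p^`().
Proof. by rewrite -signr_odd; case: (odd b); rewrite ?expr0 ?expr1 ?mul1r ?mulN1r ?derivN. Qed.

Lemma jacobi n (A : 'M[{poly R}]_n) : (\det A)^`() = \tr (\adj A *m map_mx deriv A).
Proof.
rewrite /(\det A) linear_sum /=.
transitivity (\sum_i \det (\matrix_(j, k) if j == i then (A j k)^`() else A j k)).
  under eq_bigr => s _ do rewrite deriv_sign_mul deriv_prod big_distrr /=.
  rewrite exchange_big /=; apply: eq_bigr => i _; apply: eq_bigr => s _.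
  congr (_ * _); apply: eq_bigr => j _; rewrite mxE; by case: eqP.
rewrite mxtrace_mulC /mxtrace; apply: eq_bigr => i _.
rewrite (expand_det_row _ i) mxE; apply: eq_bigr => k _.
rewrite !mxE eqxx; congr (_ * _).
rewrite /cofactor; congr (_ * \det _); apply/matrixP => a b.
by rewrite !mxE eq_sym (negbTE (neq_lift _ _)).
Qed.
End Deriv.

Section Inc.
Variables (n : nat) (r : 'I_n.+1).
Local Notation V := 'I_n.+1.

Definition hd (e : {set V}) := odflt r [pick x in e].
Definition bz (e : {set V}) (x : V) : int :=
  if x \in e then (if x == hd e then 1 else -1) else 0.

Lemma bz_out (e : {set V}) (x : V) : x \notin e -> bz e x = 0.
Proof. by rewrite /bz => /negbTE ->. Qed.

Lemma bz_spec (e : {set V}) : #|e| = 2%N -> exists a b, [/\ a != b, e = [set a; b] &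
  forall x, bz e x = if x == a then 1 else if x == b then -1 else 0].
Proof.
move/eqP/cards2P => [x [y [xy De]]].
have hde : hd e \in e.
  rewrite /hd; case: pickP => [z //|/(_ x)]; by rewrite De !inE eqxx.
have key : forall a b, a != b -> e = [set a; b] -> hd e = a -> exists a b, [/\ a != b, e = [set a; b] &
  forall x, bz e x = if x == a then 1 else if x == b then -1 else 0].
  move=> a b ab Dab ha; exists a, b; split => // z.
  rewrite /bz ha Dab !inE; case: eqP => // _; by case: eqP.
have : hd e \in [set x; y] by rewrite -De.
rewrite !inE => /orP[]/eqP hx.
  exact: key xy De hx.
by apply: (key y x) hx; rewrite 1?eq_sym // De setUC.
Qed.

Lemma bz_sq (e : {set V}) x : #|e| = 2%N -> x \in e -> bz e x ^+ 2 = 1.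
Proof.
move=> /bz_spec [a [b [ab De bE]]]; rewrite bE De !inE.
by case: eqP => _ //=; case: eqP.
Qed.

Lemma bz_pair (e : {set V}) x y : #|e| = 2%N -> x \in e -> y \in e -> x != y -> bz e x * bz e y = -1.
Proof.
move=> /bz_spec [a [b [ab De bE]]]; rewrite !bE De !inE.
case/orP=>/eqP->; case/orP=>/eqP->; rewrite ?eqxx //=.
all: by rewrite ?eqxx ?(negbTE ab) // eq_sym (negbTE ab).
Qed.

Lemma bz_sum (e : {set V}) : #|e| = 2%N -> \sum_x bz e x = 0.
Proof.
move=> /bz_spec [a [b [ab De bE]]].
rewrite (bigD1 a) //= (bigD1 b) 1?eq_sym //= big1 => [|x /andP[xb xa]].
  by rewrite !bE eqxx eq_sym (negbTE ab) eqxx addr0 addrN.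
by rewrite bE (negbTE xa) (negbTE xb).
Qed.

End Inc.

Section Comb.
Variables (n : nat) (r : 'I_n.+1).
Local Notation V := 'I_n.+1.

Definition Mz (f : {ffun 'I_n -> {set V}}) : 'M[int]_n :=
  \matrix_(i, j) bz r (f i) (lift r j).

Lemma adj_sym (T : {set {set V}}) : symmetric (adj T).
Proof. by move=> x y; rewrite /adj eq_sym setUC. Qed.

Lemma det_intr (A : 'M[int]_n) : \det (map_mx (intr : int -> rat) A) = (\det A)%:~R.
Proof. by rewrite det_map_mx. Qed.

Lemma det_Mz_disc (f : {ffun 'I_n -> {set V}}) : (forall i, #|f i| = 2%N) ->
  ~~ [forall x, forall y, connect (adj (f @: setT)) x y] -> \det (Mz f) = 0.
Proof.
set T := f @: setT => f2 nc.
have symT := sym_connect_sym (adj_sym T).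
have [z nz] : exists z, ~~ connect (adj T) r z.
  move/forallPn: nc => [x /forallPn [y nxy]].
  case cx: (connect (adj T) r x); last by exists x; rewrite cx.
  exists y; apply: contra nxy => ry; apply: connect_trans ry.
  by rewrite symT.
pose C := [set u | connect (adj T) z u].
have rC : r \notin C by rewrite inE symT.
apply/eqP; rewrite -(intr_eq0 rat) -det_intr -det_tr; apply/det0P.
exists (\row_j ((lift r j \in C)%:R : rat)).
  case: (unliftP r z) => [j0 Dz | Dz]; last by rewrite Dz connect0 in nz.
  apply/negP => /eqP/rowP/(_ j0); rewrite !mxE -Dz inE connect0 => /eqP.
  by rewrite oner_eq0.
apply/rowP => i; rewrite !mxE.
under eq_bigr do rewrite !mxE.
pose G x := ((x \in C)%:R : rat) * (bz r (f i) x)%:~R.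
transitivity (\sum_x G x).
  by rewrite (bigD1_ord r) //= {1}/G (negbTE rC) mul0r add0r.
have [a [b [ab Df bE]]] := bz_spec r (f2 i).
have adjab : adj T a b by rewrite /adj ab -Df imset_f ?inE.
have eab : (a \in C) = (b \in C) by rewrite !inE (same_connect1r symT adjab).
rewrite (bigD1 a) // (bigD1 b) 1?eq_sym //= big1 => [|x /andP[xb xa]].
  by rewrite /G !bE eqxx eq_sym (negbTE ab) eqxx eab addr0 mulrN1 mulr1 addrN.
by rewrite /G bE (negbTE xa) (negbTE xb) mulr0.
Qed.
End Comb.

Section Tree.
Variables (n : nat) (r : 'I_n.+1).
Local Notation V := 'I_n.+1.

Lemma det_Mz_tree (f : {ffun 'I_n -> {set V}}) : injective f -> (forall i, #|f i| = 2%N) ->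
  (forall x y, connect (adj (f @: setT)) x y) -> (\det (Mz r f)) ^+ 2 = 1.
Proof.
set T := f @: setT => finj f2 conn.
pose ball k := iter k (fun B : {set V} => B :|: [set y | [exists x in B, adj T x y]]) [set r].
have ballS k x y : x \in ball k -> adj T x y -> y \in ball k.+1.
  move=> xb axy; rewrite /= inE; apply/orP; right; rewrite inE.
  by apply/existsP; exists x; rewrite xb axy.
have ballW k x : x \in ball k -> x \in ball k.+1.
  by move=> xb; rewrite /= inE xb.
have Hex x : exists k, x \in ball k.
  have /connectP [p pp ->] := conn r x.
  suff H : forall p x0 k, x0 \in ball k -> path (adj T) x0 p -> last x0 p \in ball (k + size p)%N.
    by exists (size p); apply: (H p r 0%N) => //; rewrite /= inE.
  elim=> [|y q IH] x0 k /=; first by rewrite addn0.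
  move=> x0b /andP[axy pq]; rewrite addnS -addSn; apply: IH => //.
  exact: ballS axy.
pose d x := ex_minn (Hex x).
have dP x : x \in ball (d x) by rewrite /d; case: ex_minnP.
have dmin x k : x \in ball k -> (d x <= k)%N.
  by rewrite /d; case: ex_minnP => m _ H /H.
have parex x : x != r -> exists u, adj T u x && (d u < d x)%N.
  move=> xr; case Dx: (d x) => [|k].
    by have := dP x; rewrite Dx /= inE (negbTE xr).
  have := dP x; rewrite Dx /= inE => /orP[xk|].
    by have := dmin _ _ xk; rewrite Dx ltnn.
  rewrite inE => /existsP[u /andP[uk aux]]; exists u; rewrite aux /=.
  by rewrite ltnS dmin.
pose par x := odflt r [pick u | adj T u x && (d u < d x)%N].
have parP x : x != r -> adj T (par x) x && (d (par x) < d x)%N.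
  move=> xr; rewrite /par; case: pickP => [u //|none].
  by have [u] := parex x xr; rewrite none.
pose pe x := [set x; par x].
have peT x : x != r -> pe x \in T.
  by move/parP/andP => [/andP[_ h] _]; rewrite /pe setUC.
have pe_inj : {in [set~ r] &, injective pe}.
  move=> x y; rewrite !inE => xr yr Dxy.
  have := parP x xr; have := parP y yr; move=> /andP[_ dy] /andP[_ dx].
  have : x \in pe y by rewrite -Dxy /pe !inE eqxx.
  rewrite /pe !inE => /orP[/eqP //|/eqP xpy].
  have : y \in pe x by rewrite Dxy /pe !inE eqxx.
  rewrite /pe !inE => /orP[/eqP //|/eqP ypx].
  by move: dx dy; rewrite -xpy -ypx => h1 h2; have := ltn_trans h1 h2; rewrite ltnn.
have cardT : #|T| = n by rewrite card_imset // cardsT card_ord.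
have imT : pe @: [set~ r] = T.
  apply/eqP; rewrite eqEcard (card_in_imset pe_inj) cardsC1 card_ord cardT leqnn andbT.
  apply/subsetP => e /imsetP[x xin ->].
  by apply: peT; move: xin; rewrite !inE.
pose child e := odflt r [pick x | (x != r) && (pe x == e)].
have childP e : e \in T -> (child e != r) && (pe (child e) == e).
  move=> eT; rewrite /child; case: pickP => [x //|none].
  move: eT; rewrite -imT => /imsetP[x]; rewrite !inE => xr Dx.
  by have := none x; rewrite xr Dx eqxx.
have fT i : f i \in T by rewrite imset_f ?inE.
have key i x : x \in f i -> (d x <= d (child (f i)) ?= iff (x == child (f i)))%N.
  have /andP[cr /eqP pc] := childP _ (fT i).
  set c := child (f i) in cr pc *.
  rewrite -pc /pe !inE => /orP[/eqP -> | /eqP ->]; first by split; rewrite ?eqxx.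
  have /andP[_ lt] := parP _ cr.
  split; first exact: ltnW.
  by rewrite (ltn_eqF lt); apply/esym/negbTE; apply: contraTneq lt => ->; rewrite ltnn.
pose psi i := odflt i (unlift r (child (f i))).
have psiP i : lift r (psi i) = child (f i).
  have /andP[cr _] := childP _ (fT i).
  rewrite /psi; case: unliftP => [j -> //|Dc]; by rewrite Dc eqxx in cr.
have psi_inj : injective psi.
  move=> i i' E; apply: finj.
  have /andP[_ /eqP <-] := childP _ (fT i); have /andP[_ /eqP <-] := childP _ (fT i').
  by rewrite -!psiP E.
pose s0 := perm psi_inj.
have detE : \det (Mz r f) = (-1) ^+ s0 * \prod_i bz r (f i) (lift r (s0 i)).
  rewrite /determinant (bigD1 s0) //= [X in _ + X]big1 ?addr0 => [|s sne].
    by congr (_ * _); apply: eq_bigr => i _; rewrite mxE.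
  case: (pickP (fun i => lift r (s i) \notin f i)) => [i ni | allin].
    by rewrite (bigD1 i) //= mxE bz_out // mul0r mulr0.
  exfalso; move/eqP: sne; apply; apply/permP => i.
  have all i' : lift r (s i') \in f i' by apply/negPn; rewrite allin.
  have := leqif_sum (P := predT) (fun i' _ => key i' _ (all i')).
  have -> : (\sum_(i0 | predT i0) d (lift r (s i0)) = \sum_(i0 | predT i0) d (child (f i0)))%N.
    have sumE (t : 'S_n) : (\sum_i0 d (lift r (t i0)) = \sum_j d (lift r j))%N.
      by rewrite [RHS](reindex_inj (@perm_inj _ t)).
    rewrite sumE -(sumE s0); apply: eq_bigr => j _; by rewrite permE psiP.
  case => _; rewrite eqxx => /esym/forallP/(_ i) /= /eqP.
  by rewrite -psiP permE => /lift_inj.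
rewrite detE exprMn sqrr_sign mul1r -prodrXl big1 // => i _.
apply: bz_sq => //; rewrite permE psiP.
have /andP[_ /eqP pc] := childP _ (fT i).
by rewrite -[in X in _ \in X]pc /pe !inE eqxx.
Qed.
End Tree.

Section MTT.
Variables (n : nat) (r : 'I_n.+1) (E : {set {set 'I_n.+1}}).
Local Notation V := 'I_n.+1.
Hypothesis sE : simple_edges E.

Definition good (f : {ffun 'I_n -> {set V}}) := injectiveb f && spanning_tree E (f @: setT).

Lemma det_Mz_sq (f : {ffun 'I_n -> {set V}}) : (forall i, f i \in E) -> (\det (Mz r f)) ^+ 2 = (good f)%:R.
Proof.
move=> fE; have f2 i : #|f i| = 2%N := sE (fE i).
rewrite /good; case: (boolP (injectiveb f)) => [/injectiveP finj | /injectivePn [i [j ij fij]]] /=;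
  last first.
  by rewrite (determinant_alternate ij) ?expr0n // => k; rewrite !mxE fij.
rewrite /spanning_tree.
have -> : (f @: setT) \subset E by apply/subsetP => e /imsetP[i _ ->]; apply: fE.
have -> : #|f @: setT| == #|V|.-1 by rewrite card_imset // cardsT !card_ord.
rewrite andbT /=; case: (boolP [forall x, forall y, _]) => conn /=.
  apply: det_Mz_tree => // x y; by move/forallP/(_ x)/forallP/(_ y): conn.
by rewrite det_Mz_disc // expr0n.
Qed.


Definition Lm (S : pzRingType) (c : {set V} -> S) : 'M[S]_n :=
  \matrix_(i, j) \sum_e (if e \in E then c e else 0) *
     (bz r e (lift r i) * bz r e (lift r j))%:~R.

Definition Xz (f : {ffun 'I_n -> {set V}}) : int :=
  (\prod_i bz r (f i) (lift r i)) * \det (Mz r f).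

Definition fperm (s : 'S_n) (f : {ffun 'I_n -> {set V}}) : {ffun 'I_n -> {set V}} :=
  [ffun i => f (s i)].

Lemma fperm_inj s : injective (fperm s).
Proof.
move=> f g /ffunP E1; apply/ffunP => i; have := E1 (s^-1 i)%g.
by rewrite !ffunE permKV.
Qed.

Lemma Xz_sym f : \sum_(s : 'S_n) Xz (fperm s f) = (\det (Mz r f)) ^+ 2.
Proof.
have dE s : \det (Mz r (fperm s f)) = (-1) ^+ s * \det (Mz r f).
  have -> : Mz r (fperm s f) = row_perm s (Mz r f).
    by apply/matrixP => i j; rewrite !mxE ffunE.
  by rewrite row_permE det_mulmx det_perm.
rewrite expr2 -{1}det_tr /(\det (Mz r f)^T) big_distrl /=.
apply: eq_bigr => s _; rewrite /Xz dE mulrCA mulrA; congr (_ * _).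
congr (_ * _); apply: eq_bigr => i _; by rewrite !mxE ffunE.
Qed.

Variable S : idomainType.
Hypothesis nfact : (n`!%:R : S) != 0.
Variable c : {set V} -> S.
Local Notation c' := (fun e => if e \in E then c e else 0).

Lemma Lm_expand : \det (Lm c) = \sum_(f : {ffun 'I_n -> {set V}}) (\prod_i c' (f i)) * (Xz f)%:~R.
Proof.
have -> : Lm c = \matrix_(i, j) \sum_e (c' e * (bz r e (lift r i))%:~R) * (bz r e (lift r j))%:~R.
  by apply/matrixP => i j; rewrite !mxE; apply: eq_bigr => e _; rewrite intrM mulrA.
rewrite det_sum_expand; apply: eq_bigr => f _.
rewrite big_split /= -mulrA /Xz; congr (_ * _).
rewrite intrM rmorph_prod; congr (_ * _).
rewrite -det_map_mx; congr (\det _); apply/matrixP => i j; by rewrite !mxE.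
Qed.

Lemma sym_step : n`!%:R * \sum_(f : {ffun 'I_n -> {set V}}) (\prod_i c' (f i)) * (Xz f)%:~R =
  \sum_(f : {ffun 'I_n -> {set V}}) (\prod_i c' (f i)) * ((\det (Mz r f)) ^+ 2)%:~R.
Proof.
rewrite -card_Sn -sumr_const big_distrl /=.
under eq_bigr => s _ do rewrite mul1r (reindex_inj (@fperm_inj s)) /=.
rewrite exchange_big /=; apply: eq_bigr => f _.
rewrite -Xz_sym rmorph_sum big_distrr /=; apply: eq_bigr => s _.
congr (_ * _); rewrite [RHS](reindex_inj (@perm_inj _ s)) /=.
by apply: eq_bigr => i _; rewrite ffunE.
Qed.


Lemma step4 : \sum_(f : {ffun 'I_n -> {set V}}) (\prod_i c' (f i)) * ((\det (Mz r f)) ^+ 2)%:~R =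
  \sum_(f : {ffun 'I_n -> {set V}}) (good f)%:R * \prod_i c (f i).
Proof.
apply: eq_bigr => f _.
case: (boolP [forall i, f i \in E]) => [/forallP fE | /forallPn [i fi]].
  rewrite det_Mz_sq // mulrC; congr (_ * _); first by case: (good f).
  by apply: eq_bigr => i _; rewrite fE.
have -> : good f = false.
  apply/negbTE; apply: contra fi => /andP[_ /andP[sub _]].
  by apply: (subsetP sub); rewrite imset_f ?inE.
by rewrite mul0r (bigD1 i) //= (negbTE fi) mul0r mul0r.
Qed.

Lemma step5 : \sum_(f : {ffun 'I_n -> {set V}}) (good f)%:R * \prod_i c (f i) =
  n`!%:R * \sum_(T | spanning_tree E T) \prod_(e in T) c e.
Proof.
transitivity (\sum_(f : {ffun 'I_n -> {set V}} | good f) \prod_i c (f i)).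
  by rewrite [RHS]big_mkcond; apply: eq_bigr => f _; case: (good f); rewrite ?mul1r ?mul0r.
rewrite (partition_big (fun f : {ffun 'I_n -> {set V}} => f @: setT) (spanning_tree E)) /=;
  last by move=> f /andP[].
rewrite big_distrr; apply: eq_bigr => T stT.
transitivity (\sum_(f : {ffun 'I_n -> {set V}} | good f && (f @: setT == T)) \prod_(e in T) c e).
  apply: eq_bigr => f /andP[/andP[/injectiveP finj _] /eqP <-].
  rewrite big_imset /=; last by move=> x y _ _; apply: finj.
  by apply: eq_bigl => i; rewrite inE.
have cardT : #|T| = n by move: stT => /and3P[_ _ /eqP ->]; rewrite card_ord.
rewrite big_const iter_addr addr0 -[X in X = _]mulr_natl; congr (_ * _); congr (_%:R).
transitivity #|[set f : {ffun 'I_n -> {set V}} in ffun_on (mem T) | injectiveb f]|;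
  last by rewrite card_inj_ffuns_on card_ord cardT ffactnn.
apply: eq_card => f; rewrite unfold_in /= !inE /good.
apply/idP/idP.
  case/andP => /andP[inj _] /eqP imT; rewrite inj andbT.
  by apply/ffun_onP => i; rewrite -imT imset_f ?inE.
case/andP => /ffun_onP fT inj; rewrite inj /=.
have imT : f @: setT = T.
  apply/eqP; rewrite eqEcard card_imset; last exact/injectiveP.
  rewrite cardsT card_ord cardT leqnn andbT.
  by apply/subsetP => e /imsetP[i _ ->]; apply: fT.
by rewrite imT stT eqxx.
Qed.

Lemma MTT : \det (Lm c) = \sum_(T | spanning_tree E T) \prod_(e in T) c e.
Proof. by apply: (mulfI nfact); rewrite Lm_expand sym_step step4 step5. Qed.

End MTT.

Section Lap.
Variables (n : nat) (r : 'I_n.+1) (E : {set {set 'I_n.+1}}).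
Local Notation V := 'I_n.+1.
Hypothesis sE : simple_edges E.

Lemma two_eq (e : {set V}) x y : #|e| = 2%N -> x \in e -> y \in e -> x != y -> e = [set x; y].
Proof.
move=> e2 xe ye xy; apply/eqP; rewrite eq_sym eqEcard cards2 xy e2 leqnn andbT.
by apply/subsetP => z; rewrite !inE => /orP[]/eqP->.
Qed.

Variable R : realFieldType.

Lemma lap_entry (c : {set V} -> R) x y :
  laplacian E c x y = \sum_e (if e \in E then c e else 0) * (bz r e x * bz r e y)%:~R.
Proof.
rewrite /laplacian /degmx /adjmx !mxE.
have [<- | xy] := eqVneq x y.
  rewrite mulr1n /adj eqxx /= subr0.
  under eq_bigr do rewrite mxE.
  rewrite -big_mkcond /=.
  transitivity (\sum_(e | (e \in E) && (x \in e)) c e); last first.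
    rewrite [LHS]big_mkcond /=; apply: eq_bigr => e _.
    case eE: (e \in E) => /=; last by rewrite mul0r.
    case xe: (x \in e); last by rewrite bz_out ?xe // mul0r mulr0.
    by rewrite -expr2 bz_sq ?sE // mulr1.
  transitivity (\sum_(z in [set z | adj E x z]) c [set x; z]).
    by apply: eq_bigl => z; rewrite inE.
  rewrite -big_imset /=; last first.
    move=> z1 z2; rewrite !inE => /andP[xz1 _] /andP[xz2 _] E12.
    have : z1 \in [set x; z2] by rewrite -E12 !inE eqxx orbT.
    by rewrite !inE eq_sym (negbTE xz1) => /eqP.
  apply: eq_bigl => e; apply/imsetP/andP => [[z]|[eE xe]].
    by rewrite inE => /andP[xz Ez] ->; split => //; rewrite !inE eqxx.
  have e2 := sE eE.
  have [z [ze zx]] : exists z, z \in e /\ z != x.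
    move/eqP/cards2P: e2 => [a [b [ab De]]]; move: xe; rewrite De !inE.
    case: (eqVneq x a) => [-> _ | xa _]; first by exists b; split; rewrite ?inE ?eqxx ?orbT // eq_sym.
    by exists a; split; rewrite ?inE ?eqxx // eq_sym.
  exists z; last by apply: two_eq; rewrite // eq_sym.
  by rewrite inE /adj eq_sym zx -(two_eq e2 xe ze) ?eE // eq_sym.
rewrite mulr0n sub0r /adj xy /=.
case Exy: ([set x; y] \in E).
  rewrite (bigD1 [set x; y]) //= Exy bz_pair ?sE ?xy ?inE ?eqxx ?orbT // mulrN1.
  rewrite big1 ?addr0 // => e ne; case: ifP => [eE'|]; last by rewrite mul0r.
  case xe: (x \in e); last by rewrite bz_out ?xe // mul0r mulr0.
  case ye: (y \in e); last by rewrite [bz r e y]bz_out ?ye // mulr0 mulr0.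
  by rewrite (two_eq (sE eE') xe ye xy) eqxx in ne.
rewrite oppr0 big1 // => e _; case: ifP => [eE'|]; last by rewrite mul0r.
case xe: (x \in e); last by rewrite bz_out ?xe // mul0r mulr0.
case ye: (y \in e); last by rewrite [bz r e y]bz_out ?ye // mulr0 mulr0.
by rewrite -(two_eq (sE eE') xe ye xy) eE' in Exy.
Qed.

Lemma LmE (c : {set V} -> R) : minor_rc r (laplacian E c) = Lm r E c.
Proof. by apply/matrixP => i j; rewrite /minor_rc /Lm [RHS]mxE [LHS]mxE [LHS]mxE lap_entry. Qed.


Lemma Lm_det_neq0 (w : {set V} -> R) : (forall e, e \in E -> 0 < w e) ->
  graph_connected E -> \det (Lm r E w) != 0.
Proof.
move=> wpos conn; apply/negP => /det0P [v nz vL].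
pose w' e := if e \in E then w e else 0.
pose s e := \sum_i v 0 i * (bz r e (lift r i))%:~R.
have Q : \sum_e w' e * s e ^+ 2 = 0.
  transitivity ((v *m Lm r E w *m v^T) 0 0); last by rewrite vL mul0mx mxE.
  transitivity (\sum_e \sum_i \sum_j w' e * (v 0 i * (bz r e (lift r i))%:~R) *
                    (v 0 j * (bz r e (lift r j))%:~R)).
    apply: eq_bigr => e _; rewrite expr2 mulrA /s [w' e * _]big_distrr /= big_distrl /=.
    apply: eq_bigr => i _; rewrite big_distrr /=.
    by apply: eq_bigr => j _; rewrite mulrA.
  rewrite mxE exchange_big /=; apply: eq_bigr => i _.
  rewrite exchange_big /=; rewrite mxE big_distrl /=; apply: eq_bigr => j _.
  rewrite !mxE big_distrr big_distrl /=; apply: eq_bigr => e _.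
  rewrite intrM /w'; case: (e \in E); ring.
have nonneg e : true -> 0 <= w' e * s e ^+ 2.
  move=> _; rewrite /w'; case: ifP => eE; last by rewrite mul0r.
  by rewrite mulr_ge0 ?sqr_ge0 // ltW // wpos.
have sq0 e : e \in E -> s e = 0.
  move=> eE; have := psumr_eq0P nonneg Q (i := e) isT.
  rewrite /w' eE => /eqP; rewrite mulf_eq0 (gt_eqF (wpos _ eE)) /= => /eqP.
  by move/eqP; rewrite expf_eq0 /= => /eqP.
pose u x := if unlift r x is Some i then v 0 i else 0.
have sE' e : s e = \sum_x u x * (bz r e x)%:~R.
  rewrite (bigD1_ord r) //= /u unlift_none mul0r add0r.
  by apply: eq_bigr => i _; rewrite liftK.
have uadj x y : adj E x y -> u x = u y.
  case/andP => xy Exy; have e2 := sE Exy.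
  have [a [b [ab De bE]]] := bz_spec r e2.
  have := sq0 _ Exy; rewrite sE' (bigD1 a) // (bigD1 b) 1?eq_sym //= big1 => [|z /andP[zb za]];
    last by rewrite bE (negbTE za) (negbTE zb) mulr0.
  rewrite !bE eqxx eq_sym (negbTE ab) eqxx addr0 mulrN1 mulr1 => /eqP.
  rewrite subr_eq0 => /eqP uab.
  have : x \in [set a; b] by rewrite -De !inE eqxx.
  have : y \in [set a; b] by rewrite -De !inE eqxx orbT.
  rewrite !inE => /orP[]/eqP-> /orP[]/eqP-> //; by rewrite ?eqxx in xy.
have u0 x : u x = 0.
  have /connectP [p pp ->] := conn r x.
  have ur : u r = 0 by rewrite /u unlift_none.
  elim: p (r) ur pp => [|y p IH] x0 ux0 //= /andP[axy pp].
  by apply: IH pp; rewrite -(uadj _ _ axy).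
apply: (negP nz); apply/eqP/rowP => i; rewrite mxE.
by have := u0 (lift r i); rewrite /u liftK.
Qed.

End Lap.

Section Poly.
Variable R : comNzRingType.

Lemma prod_coef (I : Type) (s : seq I) (a b : I -> R) :
  let p := \prod_(x <- s) ((a x)%:P + 'X * (a x * b x)%:P) in
  [/\ p`_0 = \prod_(x <- s) a x, p`_1 = (\prod_(x <- s) a x) * \sum_(x <- s) b x &
   p`_2 *+ 2 = (\prod_(x <- s) a x) * ((\sum_(x <- s) b x) ^+ 2 - \sum_(x <- s) b x ^+ 2)].
Proof.
elim: s => [|x s [IH0 IH1 IH2]] /=.
  by rewrite !big_nil !coef1 /=; split; rewrite ?mulr0 ?expr0n /= ?subr0 ?mulr0 ?mul0rn.
rewrite !big_cons; set p := \prod_(j <- s) _ in IH0 IH1 IH2 *.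
have cE k : (((a x)%:P + 'X * (a x * b x)%:P) * p)`_k =
    a x * p`_k + (if k == 0%N then 0 else a x * b x * p`_k.-1).
  by rewrite mulrDl coefD coefCM -mulrA coefXM coefCM.
rewrite !cE /= IH0 IH1 addr0; split; first by [].
  by ring.
rewrite mulrnDl -mulrnAr IH2; ring.
Qed.
End Poly.

Section Second.
Variables (R : comNzRingType) (n : nat).

Local Notation ev := (horner_eval (0 : R)).

Lemma mderM m p q (M : 'M[{poly R}]_(m, p)) (N : 'M_(p, q)) :
  map_mx deriv (M *m N) = map_mx deriv M *m N + M *m map_mx deriv N.
Proof.
apply/matrixP => i j; rewrite !mxE linear_sum -big_split /=.
by apply: eq_bigr => k _; rewrite !mxE derivM.
Qed.

Lemma mder_scalar (d : {poly R}) : map_mx deriv (d%:M : 'M_n) = (d^`())%:M.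
Proof. by apply/matrixP => i j; rewrite !mxE derivMn. Qed.

Lemma deriv_tr (M : 'M[{poly R}]_n) : (\tr M)^`() = \tr (map_mx deriv M).
Proof. by rewrite /mxtrace linear_sum; apply: eq_bigr => i _; rewrite mxE. Qed.

Lemma ev_tr (M : 'M[{poly R}]_n) : (\tr M).[0] = \tr (map_mx ev M).
Proof. by rewrite /mxtrace horner_sum; apply: eq_bigr => i _; rewrite mxE. Qed.

Lemma ev_C m p (B : 'M[R]_(m, p)) : map_mx ev (map_mx polyC B) = B.
Proof. by apply/matrixP => i j; rewrite !mxE horner_evalE hornerC. Qed.

Lemma mder_C m p (B : 'M[R]_(m, p)) : map_mx deriv (map_mx polyC B) = 0.
Proof. by apply/matrixP => i j; rewrite !mxE derivC. Qed.

Lemma second_order (L B : 'M[R]_n) :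
  let A := map_mx polyC L + 'X *: map_mx polyC B in
  let D := \det A in
  [/\ D`_0 = \det L, D`_1 = \tr (\adj L *m B) &
   exists A1, A1 *m L + \adj L *m B = (D`_1)%:M /\ D`_2 *+ 2 = \tr (A1 *m B)].
Proof.
move=> A D.
have evA : map_mx ev A = L.
  by apply/matrixP => i j; rewrite !mxE horner_evalE hornerD hornerC hornerM hornerX mul0r addr0.
have dA : map_mx deriv A = map_mx polyC B.
  apply/matrixP => i j; rewrite !mxE derivD derivC derivM derivX derivC.
  by rewrite mulr0 addr0 mul1r add0r.
have D1 : D^`() = \tr (\adj A *m map_mx polyC B) by rewrite /D jacobi dA.
have c1 : D`_1 = \tr (\adj L *m B).
  have := coef_deriv D 0; rewrite mulr1n => <-.
  by rewrite -horner_coef0 D1 ev_tr map_mxM map_mx_adj evA ev_C.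
split.
- by rewrite -horner_coef0 -horner_evalE -det_map_mx evA.
- exact: c1.
exists (map_mx ev (map_mx deriv (\adj A))); split.
  have := congr1 (map_mx deriv) (mul_adj_mx A).
  rewrite mderM mder_scalar dA => /(congr1 (map_mx ev)).
  rewrite map_mxD !map_mxM map_mx_adj evA ev_C map_scalar_mx /= => ->.
  by rewrite horner_evalE horner_coef0 coef_deriv mulr1n.
have := coef_deriv D^`() 0; rewrite mulr1n [D^`()`_1]coef_deriv => <-; rewrite -horner_coef0.
by rewrite D1 deriv_tr mderM mder_C mulmx0 addr0 ev_tr map_mxM ev_C.
Qed.
End Second.

Section Final.
Variables (R : realFieldType) (n : nat) (r : 'I_n.+1) (E : {set {set 'I_n.+1}}).
Local Notation V := 'I_n.+1.
Hypothesis sE : simple_edges E.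
Variable w : {set V} -> R.

Lemma nfactR : (n`!%:R : R) != 0.
Proof. by rewrite pnatr_eq0 -lt0n fact_gt0. Qed.

Lemma nfactP : (n`!%:R : {poly R}) != 0.
Proof. by rewrite -polyC_natr polyC_eq0 nfactR. Qed.

Lemma Lm_lin (a b : {set V} -> R) :
  Lm r E (fun e => (a e)%:P + 'X * (b e)%:P) =
  map_mx polyC (Lm r E a) + 'X *: map_mx polyC (Lm r E b).
Proof.
apply/matrixP => i j; rewrite !mxE !rmorph_sum big_distrr -big_split /=.
apply: eq_bigr => e _; case: (e \in E); rewrite ?rmorphM ?rmorph_int /=; last first.
  by rewrite polyC0 !mul0r mulr0 addr0.
ring.
Qed.

Lemma tree_coefs (g : {set V} -> R) :
  let D := \det (Lm r E (fun e => (w e)%:P + 'X * (w e * g e)%:P)) in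
  D`_1 = \sum_(T | spanning_tree E T) tree_weight w T * \sum_(e in T) g e /\
  D`_2 *+ 2 = \sum_(T | spanning_tree E T) tree_weight w T *
      ((\sum_(e in T) g e) ^+ 2 - \sum_(e in T) g e ^+ 2).
Proof.
rewrite /= (MTT r sE nfactP) !coef_sum -sumrMnl; split; apply: eq_bigr => T _;
  have [_ h1 h2] := prod_coef (enum T) w g; rewrite !big_enum in h1 h2;
  by rewrite /tree_weight ?h1 ?h2.
Qed.

End Final.

Theorem corollary2 (R : realFieldType) (n : nat)
    (E : {set {set 'I_n.+1}}) (w om : {set 'I_n.+1} -> R) (r : 'I_n.+1) :
  simple_edges E ->
  graph_connected E ->
  (forall e, e \in E -> 0 < w e) ->
  let L := minor_rc r (laplacian E w) in
  let Lw := minor_rc r (laplacian E (fun e => w e * om e)) in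
  let Lw2 := minor_rc r (laplacian E (fun e => w e * om e ^+ 2)) in
  expect E w (Rval om) = \tr (Lw *m invmx L) /\
  variance E w (Rval om) = \tr ((Lw2 - Lw *m invmx L *m Lw) *m invmx L).
Proof.
move=> sE conn wpos L Lw Lw2.
have LE : L = Lm r E w by rewrite /L LmE.
have LwE : Lw = Lm r E (fun e => w e * om e) by rewrite /Lw LmE.
have Lw2E : Lw2 = Lm r E (fun e => w e * om e ^+ 2) by rewrite /Lw2 LmE.
set Z := \det L.
have Z0 : Z != 0 by rewrite /Z LE Lm_det_neq0.
have ZE : tree_Z E w = Z by rewrite /Z LE (MTT r sE (nfactR R n)).
have Lunit : L \in unitmx by rewrite unitmxE unitfE.
set Li := invmx L.
have adjE : \adj L = Z *: Li by rewrite /Li /invmx Lunit scalerA divff // scale1r.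
have [c1 c2] := tree_coefs r sE w om.
have [_ d1 [A1 [hA1 d2]]] := second_order L Lw.
rewrite Lm_lin -LE -LwE in c1 c2.
have [e1 _] := tree_coefs r sE w (fun e => om e ^+ 2).
have [_ f1 _] := second_order L Lw2.
rewrite Lm_lin -LE -Lw2E /= in e1.
set m1 := \tr (Li *m Lw).
have S1E : \sum_(T | spanning_tree E T) tree_weight w T * Rval om T = Z * m1.
  by rewrite -c1 d1 adjE -scalemxAl mxtraceZ.
have Eexp : expect E w (Rval om) = m1.
  rewrite /expect /tree_prob ZE.
  transitivity ((\sum_(T | spanning_tree E T) tree_weight w T * Rval om T) / Z).
    by rewrite big_distrl /=; apply: eq_bigr => T _; rewrite mulrAC.
  by rewrite S1E mulrC mulKf.
split; first by rewrite Eexp /m1 mxtrace_mulC.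
set t2 := \tr (Li *m Lw *m Li *m Lw).
set q := \tr (Li *m Lw2).
have A1E : A1 = (((\det (map_mx polyC L + 'X *: map_mx polyC Lw))`_1)%:M - \adj L *m Lw) *m Li.
  by rewrite -hA1 addrK -mulmxA /Li mulmxV // mulmx1.
have S2E : \sum_(T | spanning_tree E T) tree_weight w T * Rval om T ^+ 2 =
    Z * m1 * m1 - Z * t2 + Z * q.
  transitivity (((\det (map_mx polyC L + 'X *: map_mx polyC Lw))`_2 *+ 2) +
                ((\det (map_mx polyC L + 'X *: map_mx polyC Lw2))`_1)).
    rewrite c2 e1 -big_split /=; apply: eq_bigr => T _; rewrite /Rval; ring.
  rewrite d2 f1 A1E d1 adjE mulmxBl mul_scalar_mx -!scalemxAl !mulmxBl.
  rewrite -!scalemxAl !linearB /= !mxtraceZ -/m1 -!mulmxA -/q.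
  by rewrite /t2 !mulmxA; ring.
have S0E : \sum_(T | spanning_tree E T) tree_weight w T = Z by rewrite -ZE.
rewrite /variance Eexp /expect /tree_prob ZE.
transitivity ((\sum_(T | spanning_tree E T) tree_weight w T * Rval om T ^+ 2
   - m1 *+ 2 * \sum_(T | spanning_tree E T) tree_weight w T * Rval om T
   + m1 ^+ 2 * \sum_(T | spanning_tree E T) tree_weight w T) / Z).
  rewrite !big_distrr /= -sumrB -big_split /= big_distrl /=.
  by apply: eq_bigr => T _; ring.
rewrite S2E S1E S0E mulmxBl linearB /= -/q.
have -> : \tr (Lw2 *m Li) = q by rewrite /q mxtrace_mulC.
have -> : \tr (Lw *m Li *m Lw *m Li) = t2.
  by rewrite /t2 mxtrace_mulC !mulmxA.
by field.
Qed.
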